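(* Assume the scatter-step setting below. Then $$\mathbb{E}\big[\Delta(\theta_1-\eta G_1,\dots,\theta_{h_{ps}}-\eta G_{h_{ps}})\big]\le 6d\eta h_w\sigma'+(1+3d\eta l)\,\Delta(\theta_1,\dots,\theta_{h_{ps}}),$$ where the expectation is over the randomness of the gradient estimates (and anything the received lists depend on).
   Context: Coordinate-wise diameters: $\Delta_i(v_1,\dots,v_h)=\max_{j,k}|v_j[i]-v_k[i]|$, $\Delta=\sum_{i=1}^d\Delta_i$. Minimum–Diameter Averaging: for $f\ge0$, $q\ge2f+1$, $x_1,\dots,x_q\in\mathbb{R}^d$, $\mathrm{MDA}_f(x_1,\dots,x_q)$ is the average of the $x_i$, $i\in I^*$, where $I^*$ is an index set of size $q-f$ minimizing $\max_{i,j\in I}\|x_i-x_j\|_2$ over all $I\subset\{1,\dots,q\}$ with $|I|=q-f$ (ties arbitrary). Scatter-step setting: $L:\mathbb{R}^d\to\mathbb{R}$ differentiable with $l$-Lipschitz gradient; learning rate $\eta>0$; correct server parameters $\theta_1,\dots,\theta_{h_{ps}}\in\mathbb{R}^d$; correct workers' models $x_1,\dots,x_{h_w}\in\mathbb{R}^d$ with $\min_k\theta_k[i]\le x_r[i]\le\max_k\theta_k[i]$ for all coordinates $i$ and all $r$; random gradient estimates $g_1,\dots,g_{h_w}$ with $\mathbb{E}\|g_r-\nabla L(x_r)\|_2\le\sigma'$; integers $f_w\ge1$, $q_w\ge2f_w+1$; each correct server $j$ computes $G_j=\mathrm{MDA}_{f_w}$ of a list of $q_w$ vectors of which at least $q_w-f_w$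 entries belong to $\{g_1,\dots,g_{h_w}\}$ and the others are arbitrary. *)

(* Defs.v *)
From Stdlib Require Import Reals Lra List.
Open Scope R_scope.

(* Vectors of R^d are represented as functions nat -> R; only the
   coordinates 0..d-1 are ever inspected (d is passed explicitly). *)
Definition vec := nat -> R.
Definition vsub (u v : vec) : vec := fun i => u i - v i.
Definition vscal (a : R) (u : vec) : vec := fun i => a * u i.

Fixpoint sumR (n : nat) (f : nat -> R) : R :=
  match n with O => 0 | S m => sumR m f + f m end.

Definition inner (d : nat) (u v : vec) : R := sumR d (fun i => u i * v i).
Definition norm2 (d : nat) (v : vec) : R := sqrt (sumR d (fun i => v i * v i)).

(* maximum of a list of (nonnegative) reals; 0 for the empty list *)
Definition maxL (l : list R) : R := fold_right Rmax 0 l.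

Definition coord_diam (h : nat) (vs : nat -> vec) (i : nat) : R :=
  maxL (map (fun j => maxL (map (fun k => Rabs (vs j i - vs k i)) (seq 0 h)))
            (seq 0 h)).

Definition coord_Delta (d h : nat) (vs : nat -> vec) : R := sumR d (coord_diam h vs).

Definition set_diam (d : nat) (xs : nat -> vec) (I : list nat) : R :=
  maxL (flat_map (fun i => map (fun j => norm2 d (vsub (xs i) (xs j))) I) I).

Definition avg_over (xs : nat -> vec) (I : list nat) : vec :=
  fun c => / INR (length I) * fold_right Rplus 0 (map (fun i => xs i c) I).

Definition admissible (q f : nat) (I : list nat) : Prop :=
  NoDup I /\ (forall i, In i I -> (i < q)%nat) /\ length I = (q - f)%nat.

(* out is a (tie-breaking arbitrary) value of MDA_f(xs 0, ..., xs (q-1)) *)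
Definition is_MDA (d f q : nat) (xs : nat -> vec) (out : vec) : Prop :=
  exists I, admissible q f I /\
    (forall J, admissible q f J -> set_diam d xs I <= set_diam d xs J) /\
    (forall c, (c < d)%nat -> out c = avg_over xs I c).

Definition is_gradient (d : nat) (L : vec -> R) (G : vec -> vec) : Prop :=
  forall x eps, 0 < eps -> exists delta, 0 < delta /\
    forall y, norm2 d (vsub y x) < delta ->
      Rabs (L y - L x - inner d (G x) (vsub y x)) <= eps * norm2 d (vsub y x).

Definition lipschitz_grad (d : nat) (G : vec -> vec) (l : R) : Prop :=
  forall x y, norm2 d (vsub (G x) (G y)) <= l * norm2 d (vsub x y).

(* An abstract expectation on random variables Omega -> R: a normalized,
   linear, monotone functional on a class of integrable functions containing
   constants and closed under sums and scalar multiples. *)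
Record Expectation (Omega : Type) := {
  Integ : (Omega -> R) -> Prop;
  Expect : (Omega -> R) -> R;
  int_const : forall c, Integ (fun _ => c);
  int_add : forall f g, Integ f -> Integ g -> Integ (fun w => f w + g w);
  int_scal : forall a f, Integ f -> Integ (fun w => a * f w);
  Exp_const : forall c, Expect (fun _ => c) = c;
  Exp_add : forall f g, Integ f -> Integ g ->
      Expect (fun w => f w + g w) = Expect f + Expect g;
  Exp_scal : forall a f, Integ f -> Expect (fun w => a * f w) = a * Expect f;
  Exp_mono : forall f g, Integ f -> Integ g ->
      (forall w, f w <= g w) -> Expect f <= Expect g
}.
Arguments Integ {Omega} _ _.
Arguments Expect {Omega} _ _.

(* Main.v *)
Require Import Defs.
From Stdlib Require Import Reals List Lia Lra Psatz Classical FunctionalExtensionality.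
Open Scope R_scope.

Lemma maxL_ge0 l : 0 <= maxL l.
Proof. induction l; simpl; [lra|]. eapply Rle_trans; [exact IHl| apply Rmax_r]. Qed.

Lemma maxL_In a l : In a l -> a <= maxL l.
Proof. induction l; simpl; [tauto|]. intros [->|H]; [apply Rmax_l|].
 eapply Rle_trans; [exact (IHl H)| apply Rmax_r]. Qed.

Lemma maxL_le l M : 0 <= M -> (forall a, In a l -> a <= M) -> maxL l <= M.
Proof. induction l; simpl; intros; [lra|]. apply Rmax_lub; auto. Qed.

Lemma sumR_ext n f g : (forall i, (i < n)%nat -> f i = g i) -> sumR n f = sumR n g.
Proof. induction n; simpl; intros; [auto|]. rewrite IHn by (intros; apply H; lia). rewrite H by lia; auto. Qed.

Lemma sumR_le n f g : (forall i, (i < n)%nat -> f i <= g i) -> sumR n f <= sumR n g.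
Proof. induction n; simpl; intros; [lra|]. assert (f n <= g n) by (apply H; lia).
 assert (sumR n f <= sumR n g) by (apply IHn; intros; apply H; lia). lra. Qed.

Lemma sumR_nonneg n f : (forall i, (i < n)%nat -> 0 <= f i) -> 0 <= sumR n f.
Proof. intros. replace 0 with (sumR n (fun _ => 0)). apply sumR_le; auto.
 clear H; induction n; simpl; auto; lra. Qed.

Lemma sumR_plus n f g : sumR n (fun i => f i + g i) = sumR n f + sumR n g.
Proof. induction n; simpl; lra. Qed.

Lemma sumR_const n c : sumR n (fun _ => c) = INR n * c.
Proof. induction n; simpl sumR; [simpl; lra|]. rewrite S_INR; lra. Qed.

Lemma sumR_ge_term n f i : (forall j, (j < n)%nat -> 0 <= f j) -> (i < n)%nat -> f i <= sumR n f.
Proof. induction n; intros; [lia|]. simpl. assert (0 <= sumR n f) by (apply sumR_nonneg; intros; apply H; lia).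
 destruct (Nat.eq_dec i n). subst; lra. assert (f i <= sumR n f) by (apply IHn; intros; try apply H; lia).
 assert (0 <= f n) by (apply H; lia). lra. Qed.

Lemma norm2_ge0 d v : 0 <= norm2 d v.
Proof. apply sqrt_pos. Qed.

Lemma sq_sum_nonneg d v : 0 <= sumR d (fun i => v i * v i).
Proof. apply sumR_nonneg; intros; nra. Qed.

Lemma norm2_ext d u v : (forall i, (i < d)%nat -> u i = v i) -> norm2 d u = norm2 d v.
Proof. intros; unfold norm2; f_equal; apply sumR_ext; intros; rewrite H; auto. Qed.

Lemma coord_le_norm2 d v i : (i < d)%nat -> Rabs (v i) <= norm2 d v.
Proof. intros. unfold norm2. rewrite <- sqrt_Rsqr_abs. apply sqrt_le_1_alt.
 unfold Rsqr. apply (sumR_ge_term d (fun i => v i * v i)); auto. intros; nra. Qed.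

Lemma norm2_le_l1 d v : norm2 d v <= sumR d (fun i => Rabs (v i)).
Proof. unfold norm2; induction d; simpl. rewrite sqrt_0; lra.
 set (A := sumR d (fun i => v i * v i)) in *. assert (0 <= A) by apply sq_sum_nonneg.
 eapply Rle_trans with (sqrt A + Rabs (v d)); [|lra].
 assert (0 <= sqrt A) by apply sqrt_pos. assert (0 <= Rabs (v d)) by apply Rabs_pos.
 rewrite <- (sqrt_square (sqrt A + Rabs (v d))) by lra. apply sqrt_le_1_alt.
 assert (sqrt A * sqrt A = A) by (apply sqrt_sqrt; lra).
 assert (Rabs (v d) * Rabs (v d) = v d * v d) by (rewrite <- Rabs_mult; apply Rabs_right; nra).
 nra. Qed.

Lemma cs_sq n a b : (sumR n (fun i => a i * b i))^2 <= sumR n (fun i => a i * a i) * sumR n (fun i => b i * b i).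
Proof. induction n; simpl sumR; [lra|].
 set (S := sumR n (fun i => a i * b i)) in *. set (A := sumR n (fun i => a i * a i)) in *.
 set (B := sumR n (fun i => b i * b i)) in *. set (x := a n) in *; set (y := b n).
 assert (0 <= A) by apply sq_sum_nonneg. assert (0 <= B) by apply sq_sum_nonneg.
 set (P := A*(y*y) + B*(x*x)). set (Q := 2*S*(x*y)).
 assert (0 <= P) by (unfold P; nra).
 assert (Q^2 <= P^2).
 { assert (Q^2 = 4 * (S^2) * ((x*y)*(x*y))) by (unfold Q; ring).
   assert (P^2 - 4*A*B*((x*y)*(x*y)) = (A*(y*y) - B*(x*x))^2) by (unfold P; ring).
   assert (0 <= (x*y)*(x*y)) by nra.
   assert (S^2 * ((x*y)*(x*y)) <= (A*B)*((x*y)*(x*y))) by (apply Rmult_le_compat_r; lra).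
   assert (0 <= (A*(y*y) - B*(x*x))^2) by apply pow2_ge_0. lra. }
 assert (Q <= P).
 { destruct (Rle_lt_dec Q P); auto. assert (P*P < Q*Q) by (apply Rmult_le_0_lt_compat; lra). simpl in *; lra. } unfold Q, P in *.
 assert ((S + x*y)^2 = S^2 + 2*S*(x*y) + (x*y)*(x*y)) by ring.
 assert ((A + x*x)*(B + y*y) = A*B + (A*(y*y) + B*(x*x)) + (x*y)*(x*y)) by ring. lra. Qed.

Lemma cs n a b : sumR n (fun i => a i * b i) <= norm2 n a * norm2 n b.
Proof. unfold norm2. rewrite <- sqrt_mult by apply sq_sum_nonneg.
 eapply Rle_trans; [apply RRle_abs|]. rewrite <- sqrt_Rsqr_abs. apply sqrt_le_1_alt.
 unfold Rsqr. pose proof (cs_sq n a b). simpl in H. lra. Qed.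

Lemma minkowski n a b : norm2 n (fun i => a i + b i) <= norm2 n a + norm2 n b.
Proof. pose proof (cs n a b). pose proof (norm2_ge0 n a). pose proof (norm2_ge0 n b).
 rewrite <- (sqrt_square (norm2 n a + norm2 n b)) by lra. unfold norm2 at 1. apply sqrt_le_1_alt.
 assert (norm2 n a * norm2 n a = sumR n (fun i => a i * a i)) by (apply sqrt_sqrt, sq_sum_nonneg).
 assert (norm2 n b * norm2 n b = sumR n (fun i => b i * b i)) by (apply sqrt_sqrt, sq_sum_nonneg).
 replace (sumR n (fun i => (a i + b i) * (a i + b i))) with
   (sumR n (fun i => a i * a i) + 2 * sumR n (fun i => a i * b i) + sumR n (fun i => b i * b i)).
 nra. clear. induction n; simpl; lra. Qed.

Lemma tri d u v w : norm2 d (vsub u w) <= norm2 d (vsub u v) + norm2 d (vsub v w).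
Proof. replace (vsub u w) with (fun i => vsub u v i + vsub v w i).
 apply minkowski. unfold vsub; apply functional_extensionality; intros; ring. Qed.

Lemma norm2_sym d u v : norm2 d (vsub u v) = norm2 d (vsub v u).
Proof. unfold norm2; f_equal; apply sumR_ext; intros; unfold vsub; ring. Qed.

Lemma common_elt (q : nat) (A B : list nat) : NoDup A -> NoDup B ->
  (forall a, In a A -> (a < q)%nat) -> (forall b, In b B -> (b < q)%nat) ->
  (q < length A + length B)%nat -> exists k, In k A /\ In k B.
Proof. intros. apply NNPP; intro Hn.
 assert (NoDup (A ++ B)). { apply NoDup_app; auto. intros a Ha Hb. apply Hn; eauto. }
 assert (incl (A ++ B) (seq 0 q)). { intros a Ha. apply in_seq. apply in_app_or in Ha; destruct Ha as [Ha|Ha]; [apply H1 in Ha|apply H2 in Ha]; lia. }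
 pose proof (NoDup_incl_length H4 H5). rewrite length_app, length_seq in H6. lia. Qed.

Lemma in_set_diam d xs I k k' : In k I -> In k' I -> norm2 d (vsub (xs k) (xs k')) <= set_diam d xs I.
Proof. intros. apply maxL_In. apply in_flat_map. exists k; split; auto. apply (in_map (fun j => norm2 d (vsub (xs k) (xs j)))); auto. Qed.

Lemma set_diam_le d xs I B : 0 <= B -> (forall k k', In k I -> In k' I -> norm2 d (vsub (xs k) (xs k')) <= B) -> set_diam d xs I <= B.
Proof. intros. apply maxL_le; auto. intros a Ha. apply in_flat_map in Ha. destruct Ha as [k [Hk Ha]].
 apply in_map_iff in Ha. destruct Ha as [k' [<- Hk']]. auto. Qed.

Lemma avg_close (xs : nat -> vec) (I : list nat) c v B : (1 <= length I)%nat ->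
  (forall k, In k I -> Rabs (xs k c - v) <= B) -> Rabs (avg_over xs I c - v) <= B.
Proof. intros Hl H. unfold avg_over.
 assert (Hs : INR (length I) * (v - B) <= fold_right Rplus 0 (map (fun i => xs i c) I) <= INR (length I) * (v + B)).
 { clear Hl. revert H. induction I; intro H; cbn [length map fold_right]; [simpl; lra|]. rewrite S_INR.
   assert (Rabs (xs a c - v) <= B) by (apply H; simpl; auto).
   destruct IHI as [h1 h2]. intros; apply H; simpl; auto. pose proof (Rle_abs (xs a c - v)); pose proof (Rabs_Ropp (xs a c - v)); pose proof (Rle_abs (- (xs a c - v))). lra. }
 assert (0 < INR (length I)) by (apply lt_0_INR; lia).
 set (n := INR (length I)) in *. set (s := fold_right _ _ _) in *.
 apply Rabs_le. assert (/ n * s - v = / n * (s - n * v)) by (field; lra). rewrite H1.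
 assert (0 < / n) by (apply Rinv_0_lt_compat; lra).
 assert (/n * n = 1) by (field; lra).
 split.
 - assert (/ n * (- (n * B)) <= / n * (s - n*v)) by (apply Rmult_le_compat_l; lra). nra.
 - assert (/ n * (s - n*v) <= / n * (n*B)) by (apply Rmult_le_compat_l; lra). nra. Qed.

Lemma mda_close d f q (xs : nat -> vec) out (K : list nat) B :
  (2 * f + 1 <= q)%nat -> NoDup K -> (q - f <= length K)%nat -> (forall k, In k K -> (k < q)%nat) ->
  (forall k k', In k K -> In k' K -> norm2 d (vsub (xs k) (xs k')) <= B) -> 0 <= B ->
  is_MDA d f q xs out -> exists k0, In k0 K /\ forall i, (i < d)%nat -> Rabs (out i - xs k0 i) <= B.
Proof. intros Hq HK HlK HKq Hb HB [I [[HI [HIq HIl]] [Hmin Hout]]].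
 set (J := firstn (q - f) K).
 assert (HJK : forall k, In k J -> In k K). { intros k Hk. rewrite <- (firstn_skipn (q-f)%nat K). apply in_or_app; auto. }
 assert (HJ : admissible q f J). { split; [|split].
   - apply (NoDup_app_remove_r _ (skipn (q-f)%nat K)). unfold J; rewrite firstn_skipn; auto.
   - intros; apply HKq; auto.
   - apply firstn_length_le; auto. }
 assert (HdI : set_diam d xs I <= B). { eapply Rle_trans. apply (Hmin J HJ). apply set_diam_le; auto. }
 destruct (common_elt q I K HI HK HIq HKq) as [k0 [Hk0I Hk0K]]. lia.
 exists k0; split; auto. intros i Hi. rewrite Hout by auto. apply avg_close. lia.
 intros k Hk. eapply Rle_trans; [|exact HdI]. eapply Rle_trans; [|apply (in_set_diam d xs I k k0); auto].
 apply (coord_le_norm2 d (vsub (xs k) (xs k0)) i Hi). Qed.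

Lemma diam_pair h vs i j k : (j < h)%nat -> (k < h)%nat -> Rabs (vs j i - vs k i) <= coord_diam h vs i.
Proof. intros. unfold coord_diam. eapply Rle_trans; [|apply maxL_In; apply in_map; apply in_seq; split; [|exact H]; lia].
 apply maxL_In. apply (in_map (fun k0 => Rabs (vs j i - vs k0 i))). apply in_seq; lia. Qed.

Lemma coord_diam_ge0 h vs i : 0 <= coord_diam h vs i.
Proof. apply maxL_ge0. Qed.

Lemma coord_diam_le h vs i M : 0 <= M -> (forall j k, (j < h)%nat -> (k < h)%nat -> Rabs (vs j i - vs k i) <= M) -> coord_diam h vs i <= M.
Proof. intros. apply maxL_le; auto. intros a Ha. apply in_map_iff in Ha. destruct Ha as [j [<- Hj]].
 apply maxL_le; auto. intros b Hb. apply in_map_iff in Hb. destruct Hb as [k [<- Hk]].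
 apply in_seq in Hj, Hk. apply H0; lia. Qed.

Lemma abs_comb a b c e eta : 0 < eta -> Rabs (a - eta * (b + c + e)) <= Rabs a + eta * (Rabs b + Rabs c + Rabs e).
Proof. intros. unfold Rminus. eapply Rle_trans; [apply Rabs_triang|]. rewrite Rabs_Ropp, Rabs_mult, (Rabs_right eta) by lra.
 assert (Rabs (b + c + e) <= Rabs b + Rabs c + Rabs e).
 { eapply Rle_trans; [apply Rabs_triang|]. pose proof (Rabs_triang b c). lra. }
 apply Rplus_le_compat_l. apply Rmult_le_compat_l; lra. Qed.

Theorem mainTheorem9
  (d : nat) (L : vec -> R) (gradL : vec -> vec) (l eta sigma' : R)
  (hps hw fw qw : nat) (theta : nat -> vec) (x : nat -> vec)
  (Omega : Type) (P : Expectation Omega)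
  (g : nat -> Omega -> vec) (lst : nat -> Omega -> nat -> vec)
  (G : nat -> Omega -> vec) :
  is_gradient d L gradL ->
  lipschitz_grad d gradL l ->
  0 < eta ->
  (forall r i, (r < hw)%nat -> (i < d)%nat ->
     exists k1 k2, (k1 < hps)%nat /\ (k2 < hps)%nat /\
       theta k1 i <= x r i <= theta k2 i) ->
  (forall r, (r < hw)%nat ->
     Integ P (fun w => norm2 d (vsub (g r w) (gradL (x r)))) /\
     Expect P (fun w => norm2 d (vsub (g r w) (gradL (x r)))) <= sigma') ->
  (1 <= fw)%nat ->
  (2 * fw + 1 <= qw)%nat ->
  (forall j w, (j < hps)%nat ->
     exists K, NoDup K /\ (qw - fw <= length K)%nat /\
       forall k, In k K -> (k < qw)%nat /\
         exists r, (r < hw)%nat /\ forall i, (i < d)%nat -> lst j w k i = g r w i) ->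
  (forall j w, (j < hps)%nat -> is_MDA d fw qw (lst j w) (G j w)) ->
  Integ P (fun w => coord_Delta d hps (fun j => vsub (theta j) (vscal eta (G j w)))) ->
  Expect P (fun w => coord_Delta d hps (fun j => vsub (theta j) (vscal eta (G j w))))
    <= 6 * INR d * eta * INR hw * sigma' + (1 + 3 * INR d * eta * l) * coord_Delta d hps theta.
Proof.
 intros Hgrad Hlip Heta Hx Hg Hfw Hq Hlst Hmda Hint.
 set (Dt := coord_Delta d hps theta).
 assert (HDt : 0 <= Dt) by (apply sumR_nonneg; intros; apply coord_diam_ge0).
 assert (Hl : d = 0%nat \/ 0 <= l).
 { destruct d as [|d']; [left; auto|right].
   pose proof (Hlip (fun _ => 0) (fun _ => 1)) as H.
   assert (Hp : 0 < norm2 (S d') (vsub (fun _ => 0) (fun _ => 1))).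
   { unfold norm2. apply sqrt_lt_R0. rewrite (sumR_ext _ _ (fun _ => 1)) by (intros; unfold vsub; ring).
     rewrite sumR_const. rewrite Rmult_1_r. apply lt_0_INR; lia. }
   pose proof (norm2_ge0 (S d') (vsub (gradL (fun _ => 0)) (gradL (fun _ => 1)))).
   destruct (Rle_lt_dec 0 l); auto. assert (l * norm2 (S d') (vsub (fun _ : nat => 0) (fun _ : nat => 1)) < 0).
   { assert (0 < (- l) * norm2 (S d') (vsub (fun _ : nat => 0) (fun _ : nat => 1))) by (apply Rmult_lt_0_compat; lra). lra. } lra. }
 assert (Hxx : forall r r', (r < hw)%nat -> (r' < hw)%nat -> norm2 d (vsub (x r) (x r')) <= Dt).
 { intros r r' Hr Hr'. eapply Rle_trans; [apply norm2_le_l1|]. apply sumR_le. intros i Hi.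
   destruct (Hx r i Hr Hi) as [k1 [k2 [Hk1 [Hk2 Hb]]]]. destruct (Hx r' i Hr' Hi) as [k1' [k2' [Hk1' [Hk2' Hb']]]].
   pose proof (diam_pair hps theta i k2 k1' Hk2 Hk1'). pose proof (diam_pair hps theta i k2' k1 Hk2' Hk1).
   unfold vsub. apply Rabs_le. pose proof (Rle_abs (theta k2 i - theta k1' i)). pose proof (Rle_abs (theta k2' i - theta k1 i)). lra. }
 assert (Hlx : forall r r', (r < hw)%nat -> (r' < hw)%nat -> l * norm2 d (vsub (x r) (x r')) <= l * Dt).
 { intros. destruct Hl as [Hd|Hl]. subst d. unfold Dt, coord_Delta, norm2; simpl. rewrite sqrt_0; lra.
   apply Rmult_le_compat_l; auto. }
 assert (HlD : 0 <= l * Dt).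
 { destruct Hl as [Hd|Hl]. subst d. unfold Dt, coord_Delta; simpl; lra. apply Rmult_le_pos; auto. }
 set (e := fun r w => norm2 d (vsub (g r w) (gradL (x r)))).
 set (Sm := fun w => sumR hw (fun r => e r w)).
 assert (HSm : forall w, 0 <= Sm w) by (intros; apply sumR_nonneg; intros; apply norm2_ge0).
 assert (Hes : forall w r, (r < hw)%nat -> e r w <= Sm w).
 { intros. apply (sumR_ge_term hw (fun r => e r w)); auto. intros; apply norm2_ge0. }
 set (Bw := fun w => 2 * Sm w + l * Dt).
 assert (HB0 : forall w, 0 <= Bw w) by (intros; unfold Bw; pose proof (HSm w); lra).
 assert (Hgg : forall w r r', (r < hw)%nat -> (r' < hw)%nat -> norm2 d (vsub (g r w) (g r' w)) <= Bw w).
 { intros w r r' Hr Hr'. eapply Rle_trans; [apply (tri d _ (gradL (x r)))|].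
   eapply Rle_trans; [apply Rplus_le_compat_l; apply (tri d _ (gradL (x r')))|].
   rewrite (norm2_sym d (gradL (x r')) (g r' w)).
   pose proof (Hes w r Hr). pose proof (Hes w r' Hr'). unfold e in *.
   pose proof (Hlip (x r) (x r')). pose proof (Hlx r r' Hr Hr'). unfold Bw. lra. }
 assert (HG : forall w j, (j < hps)%nat -> exists r, (r < hw)%nat /\ forall i, (i < d)%nat -> Rabs (G j w i - g r w i) <= Bw w).
 { intros w j Hj. destruct (Hlst j w Hj) as [K [HK [HlK HKp]]].
   destruct (mda_close d fw qw (lst j w) (G j w) K (Bw w) Hq HK HlK) as [k0 [Hk0 Hc]]; auto.
   - intros k Hk; apply HKp; auto.
   - intros k k' Hk Hk'. destruct (HKp k Hk) as [_ [r [Hr Er]]]. destruct (HKp k' Hk') as [_ [r' [Hr' Er']]].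
     rewrite (norm2_ext d _ (vsub (g r w) (g r' w))). apply Hgg; auto.
     intros i Hi; unfold vsub; rewrite Er, Er'; auto.
   - destruct (HKp k0 Hk0) as [_ [r [Hr Er]]]. exists r; split; auto. intros i Hi. rewrite <- Er; auto. }
 assert (Hpt : forall w, coord_Delta d hps (fun j => vsub (theta j) (vscal eta (G j w))) <= 6 * INR d * eta * Sm w + (1 + 3 * INR d * eta * l) * Dt).
 { intros w. unfold coord_Delta at 1.
   eapply Rle_trans with (sumR d (fun i => coord_diam hps theta i + eta * (3 * Bw w))).
   - apply sumR_le. intros i Hi. apply coord_diam_le.
     + pose proof (coord_diam_ge0 hps theta i). pose proof (HB0 w). nra.
     + intros j k Hj Hk. destruct (HG w j Hj) as [r0 [Hr0 H0]]. destruct (HG w k Hk) as [r1 [Hr1 H1]].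
       unfold vsub, vscal.
       replace (theta j i - eta * G j w i - (theta k i - eta * G k w i)) with
         ((theta j i - theta k i) - eta * ((G j w i - g r0 w i) + (g r0 w i - g r1 w i) + (g r1 w i - G k w i))) by ring.
       eapply Rle_trans; [apply abs_comb; auto|].
       pose proof (diam_pair hps theta i j k Hj Hk). pose proof (H0 i Hi). pose proof (H1 i Hi).
       rewrite (Rabs_minus_sym (g r1 w i)) in *.
       pose proof (coord_le_norm2 d (vsub (g r0 w) (g r1 w)) i Hi). pose proof (Hgg w r0 r1 Hr0 Hr1).
       unfold vsub in *.
       assert (Rabs (G j w i - g r0 w i) + Rabs (g r0 w i - g r1 w i) + Rabs (G k w i - g r1 w i) <= 3 * Bw w) by lra.
       apply Rplus_le_compat; [lra|]. apply Rmult_le_compat_l; lra.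
   - rewrite sumR_plus, sumR_const. fold (coord_Delta d hps theta). fold Dt. unfold Bw. apply Req_le; ring. }
 assert (HIS : Integ P Sm).
 { unfold Sm. assert (forall n, (n <= hw)%nat -> Integ P (fun w => sumR n (fun r => e r w))).
   { induction n; intros. exact (int_const _ P 0). simpl. apply int_add. apply IHn; lia. apply Hg; lia. }
   apply H; auto. }
 assert (HES : Expect P Sm <= INR hw * sigma').
 { unfold Sm. assert (forall n, (n <= hw)%nat -> Integ P (fun w => sumR n (fun r => e r w)) /\ Expect P (fun w => sumR n (fun r => e r w)) <= INR n * sigma').
   { induction n; intros. split. exact (int_const _ P 0). simpl. rewrite (Exp_const _ P 0). lra.
     destruct IHn as [I1 E1]; [lia|]. destruct (Hg n) as [I2 E2]; [lia|]. split. simpl. apply int_add; auto.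
     simpl sumR. rewrite (Exp_add _ P (fun w => sumR n (fun r => e r w)) (fun w => e n w)) by auto. rewrite S_INR. fold (e n) in E2. change (Expect P (fun w => e n w) <= sigma') in E2. lra. }
   apply H; auto. }
 eapply Rle_trans. apply (Exp_mono _ P _ (fun w => 6 * INR d * eta * Sm w + (1 + 3 * INR d * eta * l) * Dt)); auto.
 apply int_add. apply int_scal; auto. apply int_const.
 rewrite (Exp_add _ P (fun w => 6 * INR d * eta * Sm w) (fun _ => (1 + 3 * INR d * eta * l) * Dt)).
 2: apply int_scal; auto. 2: apply int_const.
 rewrite (Exp_scal _ P), (Exp_const _ P) by auto.
 assert (0 <= 6 * INR d * eta) by (pose proof (pos_INR d); nra).
 assert (6 * INR d * eta * Expect P Sm <= 6 * INR d * eta * (INR hw * sigma')) by (apply Rmult_le_compat_l; auto).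
 fold Dt. lra.
Qed.
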